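(* There is no $8$-divisible set of points of cardinality $52$ in $\mathrm{PG}(v-1,2)$, for any $v\ge1$.
   Context: $\mathrm{PG}(v-1,2)$ is the set of $1$-dimensional subspaces (points) of $\mathbb{F}_2^v$; hyperplanes are the $(v-1)$-dimensional subspaces. A set $\mathcal{C}$ of points is $\Delta$-divisible if there is an integer $u$ with $|\mathcal{C}\cap H|\equiv u\pmod{\Delta}$ for every hyperplane $H$, where $\mathcal{C}\cap H$ is the set of points of $\mathcal{C}$ contained in $H$. *)

(* Defs.v *)
From HB Require Import structures.
From mathcomp Require Import all_boot all_order all_algebra.
Set Implicit Arguments. Unset Strict Implicit. Unset Printing Implicit Defensive.
Import GRing.Theory.

(* Ambient space F_2^v = row vectors 'rV['F_2]_v.
   A point of PG(v-1,2) (a 1-dimensional subspace of F_2^v) is identified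
   with its unique nonzero vector. *)
Definition is_point (v : nat) (x : 'rV['F_2]_v) : bool := x != 0%R.

Definition point_set (v : nat) (C : {set 'rV['F_2]_v}) : Prop :=
  forall x, x \in C -> is_point x.

(* A hyperplane is a (v-1)-dimensional subspace of F_2^v, represented by a
   square matrix whose row space is that subspace. *)
Definition is_hyperplane (v : nat) (H : 'M['F_2]_v) : Prop := \rank H = v.-1.

Definition meet_hyp (v : nat) (C : {set 'rV['F_2]_v}) (H : 'M['F_2]_v)
  : {set 'rV['F_2]_v} := [set x in C | (x <= H)%MS].

Definition divisible (v : nat) (Delta : nat) (C : {set 'rV['F_2]_v}) : Prop :=
  exists u : nat, forall H : 'M['F_2]_v, is_hyperplane H ->
    #|meet_hyp C H| = u %[mod Delta].

(* Main.v *)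
Set Warnings "-notation-overridden,-ambiguous-paths".
Require Import Defs.
From mathcomp Require Import all_boot all_order all_algebra.
From mathcomp Require Import zify.
Set Implicit Arguments. Unset Strict Implicit. Unset Printing Implicit Defensive.
Import GRing.Theory Num.Theory.
Local Open Scope ring_scope.

Definition dot (v : nat) (x : 'rV['F_2]_v) (a : 'cV['F_2]_v) : 'F_2 := (x *m a) 0 0.
Definition chi (v : nat) (x : 'rV['F_2]_v) (a : 'cV['F_2]_v) : int :=
  if dot x a == 0 then 1 else -1.

Lemma F2_cases (e : 'F_2) : e = 0 \/ e = 1.
Proof.
have: [forall e : 'F_2, (e == 0) || (e == 1)].
  by apply/forallP => -[[|[|m]] Hm] //.
by move/forallP/(_ e)/orP => [] /eqP; auto.
Qed.

Lemma F2_11 : (1 + 1 : 'F_2) = 0.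
Proof. by apply/val_inj; vm_compute. Qed.

Lemma F2_double (e : 'F_2) : e + e = 0.
Proof.
case: (F2_cases e) => ->; first by rewrite addr0.
by apply/val_inj; vm_compute.
Qed.

Lemma dotDl v (x y : 'rV['F_2]_v) a : dot (x + y) a = dot x a + dot y a.
Proof. by rewrite /dot mulmxDl mxE. Qed.

Lemma dotDr v (x : 'rV['F_2]_v) a b : dot x (a + b) = dot x a + dot x b.
Proof. by rewrite /dot mulmxDr mxE. Qed.

Lemma chiD v (x y : 'rV['F_2]_v) a : chi (x + y) a = chi x a * chi y a.
Proof.
rewrite /chi dotDl.
by case: (F2_cases (dot x a)) => ->; case: (F2_cases (dot y a)) => ->;
  rewrite ?addr0 ?add0r ?F2_11 ?eqxx ?oner_eq0 ?mulr1 ?mul1r ?mulN1r ?opprK.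
Qed.

Lemma card_cV v : #|{: 'cV['F_2]_v}| = (2 ^ v)%N.
Proof. by rewrite card_mx card_Fp // muln1. Qed.

Lemma sum_chi v (x : 'rV['F_2]_v) :
  \sum_(a : 'cV['F_2]_v) chi x a = if x == 0 then (2 ^ v)%:Z else 0.
Proof.
have [->|nz] := eqVneq x 0; rewrite ?eqxx ?(negbTE nz).
  rewrite (eq_bigr (fun _ => 1)); last by move=> a _; rewrite /chi /dot mul0mx mxE eqxx.
  by rewrite sumr_const card_cV natz.
have [i Hi] : exists i, x 0 i != 0.
  apply/existsP; apply: contraR nz => /existsPn H; apply/eqP/matrixP => r j.
  by rewrite (ord1 r) mxE; apply/eqP; move: (H j); rewrite negbK.
pose a0 : 'cV['F_2]_v := delta_mx i 0.
have Ha0 : dot x a0 = 1.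
  rewrite /dot mxE (bigD1 i) //= big1 ?addr0; last first.
    by move=> j /negbTE nj; rewrite mxE nj /= mulr0.
  rewrite mxE !eqxx mulr1; by case: (F2_cases (x 0 i)) Hi => ->.
have E1 : \sum_(a : 'cV['F_2]_v) chi x a = \sum_(a : 'cV['F_2]_v) chi x (a + a0).
  exact: (reindex_inj (addIr a0)).
have E2 : \sum_(a : 'cV['F_2]_v) chi x (a + a0) = - \sum_(a : 'cV['F_2]_v) chi x a.
  rewrite -sumrN; apply: eq_bigr => a _.
  rewrite /chi dotDr Ha0.
  by case: (F2_cases (dot x a)) => ->; rewrite ?add0r ?F2_11 ?eqxx ?oner_eq0 ?opprK.
lia.
Qed.

Definition sC v (C : {set 'rV['F_2]_v}) (a : 'cV['F_2]_v) : int := \sum_(x in C) chi x a.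

Lemma addr_eq0_F2 v (x y : 'rV['F_2]_v) : (x + y == 0) = (x == y).
Proof.
apply/eqP/eqP => [H|->].
  apply/matrixP => i j; move/matrixP: H => /(_ i j); rewrite !mxE => H.
  by rewrite -[x i j]addr0 -(F2_double (y i j)) addrA H add0r.
by apply/matrixP => i j; rewrite !mxE F2_double.
Qed.

Lemma mom1 v (C : {set 'rV['F_2]_v}) : (forall x, x \in C -> x != 0) ->
  \sum_a sC C a = 0.
Proof.
move=> HC; rewrite /sC exchange_big /=; apply: big1 => x xC.
by rewrite sum_chi (negbTE (HC x xC)).
Qed.

Lemma mom2 v (C : {set 'rV['F_2]_v}) :
  \sum_a sC C a ^+ 2 = (#|C| * 2 ^ v)%N%:Z.
Proof.
have E : forall a, sC C a ^+ 2 = \sum_(x in C) \sum_(y in C) chi (x + y) a.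
  move=> a; rewrite expr2 /sC mulr_suml; apply: eq_bigr => x _.
  by rewrite mulr_sumr; apply: eq_bigr => y _; rewrite chiD.
under eq_bigr do rewrite E.
rewrite exchange_big /=.
under eq_bigr do rewrite exchange_big /=.
under eq_bigr do under eq_bigr do rewrite sum_chi addr_eq0_F2.
rewrite (eq_bigr (fun _ => (2 ^ v)%N%:Z)); last first.
  move=> x xC; rewrite (bigD1 x) //= eqxx big1 ?addr0 // => y /andP[_].
  by rewrite eq_sym => /negbTE ->.
by rewrite sumr_const -mulr_natr natz -PoszM mulnC.
Qed.

Lemma mom3 v (C : {set 'rV['F_2]_v}) : 0 <= \sum_a sC C a ^+ 3.
Proof.
have E : forall a, sC C a ^+ 3 =
    \sum_(x in C) \sum_(y in C) \sum_(z in C) chi (x + y + z) a.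
  move=> a; rewrite exprS expr2 /sC mulr_suml; apply: eq_bigr => x _.
  rewrite mulr_suml mulr_sumr; apply: eq_bigr => y _.
  rewrite !mulr_sumr; apply: eq_bigr => z _.
  by rewrite !chiD mulrA.
under eq_bigr do rewrite E.
rewrite exchange_big /=.
under eq_bigr do rewrite exchange_big /=.
under eq_bigr do under eq_bigr do rewrite exchange_big /=.
apply: sumr_ge0 => x _; apply: sumr_ge0 => y _; apply: sumr_ge0 => z _.
by rewrite sum_chi; case: ifP.
Qed.

Definition mC v (C : {set 'rV['F_2]_v}) (a : 'cV['F_2]_v) : nat :=
  #|[set x in C | dot x a == 0]|.

Lemma sC_mC v (C : {set 'rV['F_2]_v}) a : sC C a = 2 * (mC C a)%:Z - #|C|%:Z.
Proof.
rewrite /sC (bigID (fun x => dot x a == 0)) /=.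
rewrite (eq_bigr (fun _ => 1)); last by move=> x /andP[_ H]; rewrite /chi H.
rewrite [X in _ + X](eq_bigr (fun _ => -1)); last by move=> x /andP[_ /negbTE H]; rewrite /chi H.
rewrite !sumr_const.
set k1 := #|_|; set k2 := #|_|.
have h1 : k1 = mC C a by apply: eq_card => x; rewrite inE.
have h2 : (k1 + k2)%N = #|C|.
  rewrite -(cardID (fun x => dot x a == 0) C); congr (_ + _)%N; apply: eq_card => x; rewrite !inE /=; last by rewrite unfold_in /= andbC.
rewrite -(mulr_natr (-1)) mulN1r !natz -h1 -h2; lia.
Qed.

Lemma dot_eq0 v (x : 'rV['F_2]_v) (a : 'cV['F_2]_v) : (x *m a == 0) = (dot x a == 0).
Proof.
rewrite /dot; apply/eqP/eqP => [->|H]; first by rewrite mxE.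
by apply/matrixP => i j; rewrite (ord1 i) (ord1 j) H mxE.
Qed.

Lemma hyp_ker v (a : 'cV['F_2]_v) : a != 0 -> is_hyperplane (kermx a).
Proof.
move=> nz; rewrite /is_hyperplane mxrank_ker.
have r1 : \rank a = 1%N.
  apply/eqP; rewrite eqn_leq rank_leq_col lt0n mxrank_eq0 nz //.
by rewrite r1 subn1.
Qed.

Lemma meet_ker v (C : {set 'rV['F_2]_v}) a :
  meet_hyp C (kermx a) = [set x in C | dot x a == 0].
Proof. by apply/setP => x; rewrite !inE sub_kermx dot_eq0. Qed.

Lemma mC_le v (C : {set 'rV['F_2]_v}) a : (mC C a <= #|C|)%N.
Proof. by apply: subset_leq_card; apply/subsetP => x; rewrite inE => /andP[]. Qed.

Lemma g_ge0 (m : nat) : (m %% 8 = 4)%N -> (m <= 52)%N ->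
  let s : int := 2 * m%:Z - 52 in 0 <= - s ^+ 3 + 44 * s ^+ 2 + 464 * s - 2496.
Proof.
move=> Hm Hle /=.
have [t Et] : exists t, m = (8 * t + 4)%N by exists (m %/ 8)%N; rewrite {1}(divn_eq m 8) Hm mulnC.
rewrite Et in Hle *; clear Et Hm.
have : (t <= 6)%N by lia.
clear Hle.
by case: t => [|[|[|[|[|[|[|t]]]]]]] //.
Qed.

Lemma sumz (I : finType) (F : I -> nat) : \sum_i (F i : int) = Posz (\sum_i F i)%N.
Proof. by elim/big_rec2: _ => // i a b _ ->; rewrite PoszD. Qed.

Close Scope ring_scope.

Theorem lemma5p10 (v : nat) : 1 <= v ->
  forall C : {set 'rV['F_2]_v},
    point_set C -> divisible 8 C -> #|C| <> 52.
Proof.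
move=> _ C HC [u Hu] Hcard.
have Hnz : forall x, x \in C -> x != 0%R := HC.
have Hv : 52 <= 2 ^ v.
  by have := max_card C; rewrite card_mx card_Fp // mul1n Hcard.
have Hv3 : 3 <= v.
  rewrite leqNgt; apply/negP => h.
  have : 2 ^ v <= 2 ^ 2 by rewrite leq_exp2l // -ltnS.
  move: Hv; rewrite /=; lia.
have [K HK] : exists K, 2 ^ v = 8 * K.
  by exists (2 ^ (v - 3)); rewrite -(subnKC Hv3) expnD subnKC.
have Hm0 : forall a : 'cV['F_2]_v, a != 0%R -> mC C a %% 8 = u %% 8.
  by move=> a nz; have := Hu _ (hyp_ker nz); rewrite meet_ker.
have Hzero : mC C 0%R = 52.
  rewrite /mC -Hcard; apply: eq_card => x; rewrite inE /dot mulmx0 mxE eqxx andbT //.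
have Hsum : \sum_a mC C a = 26 * 2 ^ v.
  have := mom1 Hnz.
  rewrite (eq_bigr (fun a => 2 * (mC C a)%:Z - 52)%R); last by move=> a _; rewrite sC_mC Hcard.
  rewrite sumrB -mulr_sumr sumr_const card_cV sumz -(mulr_natr (52%:R : int)) !natz.
  lia.
have Hsplit : \sum_a mC C a =
    52 + (8 * \sum_(a | a != 0%R) (mC C a %/ 8) + (2 ^ v - 1) * (u %% 8)).
  rewrite (bigD1 0%R) //= Hzero; congr (_ + _).
  rewrite (eq_bigr (fun a => (mC C a %/ 8) * 8 + u %% 8)); last first.
    by move=> a nz; rewrite {1}(divn_eq (mC C a) 8) Hm0.
  rewrite big_split /= -big_distrl /= sum_nat_const.
  have -> : #|(fun a : 'cV['F_2]_v => a != 0%R)| = 2 ^ v - 1.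
    by rewrite -(card_cV v) subn1 -(cardC1 (0%R : 'cV['F_2]_v)); apply: eq_card.
  by rewrite mulnC.
have Hu4 : u %% 8 = 4.
  move: Hsplit; rewrite Hsum HK.
  have : u %% 8 < 8 by rewrite ltn_mod.
  move: (u %% 8) (\sum_(a | a != 0%R) (mC C a %/ 8)) => r Q.
  nia.
have Hmod : forall a, mC C a %% 8 = 4.
  move=> a; have [->|nz] := eqVneq a 0%R; first by rewrite Hzero.
  by rewrite Hm0 // Hu4.
have Hg : (0 <= \sum_a (- sC C a ^+ 3 + 44 * sC C a ^+ 2 + 464 * sC C a - 2496))%R.
  apply: sumr_ge0 => a _.
  have := g_ge0 (Hmod a) (leq_trans (mC_le C a) (eq_leq Hcard)).
  by rewrite /= sC_mC Hcard.
rewrite !big_split /= sumrN -!mulr_sumr sumr_const card_cV in Hg.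
rewrite (mom1 Hnz) mom2 Hcard in Hg.
have H3 := mom3 C.
move: Hg; rewrite -(mulr_natr (-2496)%R) !natz.
move: H3; move: (\sum_a sC C a ^+ 3)%R => T; rewrite PoszM.
have : (0 < 2 ^ v)%N by rewrite expn_gt0.
lia.
Qed.
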